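(* Let $M^2$ be a minimal surface of general type in $\mathbb R^4$, parameterized by semi-canonical parameters $(u,v)$, and suppose $\gamma_1=0$ identically. Then $E=E(u)$ depends only on $u$; the invariants $\mu=\mu(u)$, $\nu=\nu(u)$, $\gamma_2=\gamma_2(u)$, $\beta_2=\beta_2(u)$ depend only on $u$; $\beta_1=0$; and $$\gamma_2=\frac{1}{4\sqrt E}\big(\ln|\mu^2-\nu^2|\big)_u,\qquad \beta_2=\frac{1}{\sqrt E}\Big(\ln\sqrt{\Big|\frac{\mu+\nu}{\mu-\nu}\Big|}\Big)_u .$$
   Context: $\mathbb R^4$ carries the standard metric $g=\langle\cdot,\cdot\rangle$ and flat connection $\nabla'$; everything is smooth and local. For a regular surface $M^2: z=z(u,v)$ let $E,F,G$ be the first fundamental form coefficients, $\sigma$ the second fundamental form, $K$ the Gauss curvature, and $\varkappa$ the curvature of the normal connection, $\varkappa=g(R^\perp(x,y)n_2,n_1)$ for a positively oriented orthonormal frame $(x,y,n_1,n_2)$ with $x,y$ tangent. Minimal means $\sigma(x,x)+\sigma(y,y)=0$ for orthonormal tangent $x,y$. A minimal surface is of general type if $K^2-\varkappa^2>0$ and $\varkappa\neq0$ everywhere. The ellipse of curvature at $p$ is $\{\sigma(v,v): v\in T_pM^2,\ |v|=1\}$; a tangent line is canonical if it is collinear with an axis of this ellipse. The geometric frame is a positively oriented orthonormal frame $\{x,y,n_1,n_2\}$ with $x,y$ canonical tangent fields and $n_1,n_2$ normal, satisfying $\nabla'_xx=\gamma_1y+\nu n_1$, $\nabla'_xy=-\gamma_1x+\mu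 n_2$, $\nabla'_yx=-\gamma_2y+\mu n_2$, $\nabla'_yy=\gamma_2x-\nu n_1$, $\nabla'_xn_1=-\nu x+\beta_1n_2$, $\nabla'_yn_1=\nu y+\beta_2n_2$, $\nabla'_xn_2=-\mu y-\beta_1n_1$, $\nabla'_yn_2=-\mu x-\beta_2n_1$, with $\mu>0$, $\nu\ne0$, $\mu^2\ne\nu^2$; the functions $\nu,\mu,\gamma_1,\gamma_2,\beta_1,\beta_2$ are the invariants of $M^2$. Parameters $(u,v)$ are semi-canonical if the parametric lines are integral curves of the canonical tangents, with $F=0$, $x=z_u/\sqrt E$, $y=z_v/\sqrt G$; then $\gamma_1=-y(\ln\sqrt E)$, $\gamma_2=-x(\ln\sqrt G)$. *)

(* Defs.v *)
From Stdlib Require Import Reals Lra.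
Open Scope R_scope.

Record V4 := mkV4 { c1 : R; c2 : R; c3 : R; c4 : R }.

Definition vadd (p q : V4) : V4 :=
  mkV4 (c1 p + c1 q) (c2 p + c2 q) (c3 p + c3 q) (c4 p + c4 q).
Definition vscale (r : R) (p : V4) : V4 :=
  mkV4 (r * c1 p) (r * c2 p) (r * c3 p) (r * c4 p).
Definition vdot (p q : V4) : R :=
  c1 p * c1 q + c2 p * c2 q + c3 p * c3 q + c4 p * c4 q.

Definition det3 (a11 a12 a13 a21 a22 a23 a31 a32 a33 : R) : R :=
  a11 * (a22 * a33 - a23 * a32) - a12 * (a21 * a33 - a23 * a31)
  + a13 * (a21 * a32 - a22 * a31).

Definition det4 (p q r s : V4) : R :=
    c1 p * det3 (c2 q) (c3 q) (c4 q) (c2 r) (c3 r) (c4 r) (c2 s) (c3 s) (c4 s)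
  - c2 p * det3 (c1 q) (c3 q) (c4 q) (c1 r) (c3 r) (c4 r) (c1 s) (c3 s) (c4 s)
  + c3 p * det3 (c1 q) (c2 q) (c4 q) (c1 r) (c2 r) (c4 r) (c1 s) (c2 s) (c4 s)
  - c4 p * det3 (c1 q) (c2 q) (c3 q) (c1 r) (c2 r) (c3 r) (c1 s) (c2 s) (c3 s).

Definition rect (a b c d : R) (u v : R) : Prop := a < u < b /\ c < v < d.

Definition cont2 (U : R -> R -> Prop) (f : R -> R -> R) : Prop :=
  forall u v, U u v -> forall eps, 0 < eps -> exists del, 0 < del /\
    forall u' v', U u' v' -> Rabs (u' - u) < del -> Rabs (v' - v) < del ->
      Rabs (f u' v' - f u v) < eps.

Definition pdu (f : R -> R -> R) (u v L : R) : Prop :=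
  derivable_pt_lim (fun t => f t v) u L.
Definition pdv (f : R -> R -> R) (u v L : R) : Prop :=
  derivable_pt_lim (fun t => f u t) v L.

(** Smooth (C^infinity) functions on U: all iterated partial derivatives
    exist on U and are jointly continuous. *)
CoInductive smooth2 (U : R -> R -> Prop) (f : R -> R -> R) : Prop :=
  smooth2_intro : forall fu fv : R -> R -> R,
    cont2 U f ->
    (forall u v, U u v -> pdu f u v (fu u v)) ->
    (forall u v, U u v -> pdv f u v (fv u v)) ->
    smooth2 U fu -> smooth2 U fv -> smooth2 U f.

Definition smooth4 (U : R -> R -> Prop) (F : R -> R -> V4) : Prop :=
  smooth2 U (fun s t => c1 (F s t)) /\ smooth2 U (fun s t => c2 (F s t)) /\
  smooth2 U (fun s t => c3 (F s t)) /\ smooth2 U (fun s t => c4 (F s t)).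

Definition pdu4 (F : R -> R -> V4) (u v : R) (W : V4) : Prop :=
  pdu (fun s t => c1 (F s t)) u v (c1 W) /\ pdu (fun s t => c2 (F s t)) u v (c2 W) /\
  pdu (fun s t => c3 (F s t)) u v (c3 W) /\ pdu (fun s t => c4 (F s t)) u v (c4 W).
Definition pdv4 (F : R -> R -> V4) (u v : R) (W : V4) : Prop :=
  pdv (fun s t => c1 (F s t)) u v (c1 W) /\ pdv (fun s t => c2 (F s t)) u v (c2 W) /\
  pdv (fun s t => c3 (F s t)) u v (c3 W) /\ pdv (fun s t => c4 (F s t)) u v (c4 W).

(** First fundamental form coefficients, from zu = z_u and zv = z_v. *)
Definition Ecoef (zu : R -> R -> V4) (u v : R) : R := vdot (zu u v) (zu u v).
Definition Fcoef (zu zv : R -> R -> V4) (u v : R) : R := vdot (zu u v) (zv u v).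
Definition Gcoef (zv : R -> R -> V4) (u v : R) : R := vdot (zv u v) (zv u v).

Definition semi_canonical (U : R -> R -> Prop) (z zu zv x y : R -> R -> V4) : Prop :=
  smooth4 U z /\
  (forall u v, U u v ->
     pdu4 z u v (zu u v) /\ pdv4 z u v (zv u v) /\
     0 < Ecoef zu u v /\ 0 < Gcoef zv u v /\ Fcoef zu zv u v = 0 /\
     x u v = vscale (/ sqrt (Ecoef zu u v)) (zu u v) /\
     y u v = vscale (/ sqrt (Gcoef zv u v)) (zv u v)).

(** Covariant derivatives along x = z_u/sqrt E and y = z_v/sqrt G:
    nabla'_x W = T and nabla'_y W = T on U. *)
Definition nabla_x_eq (U : R -> R -> Prop) (zu W T : R -> R -> V4) : Prop :=
  forall u v, U u v -> exists D, pdu4 W u v D /\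
    vscale (/ sqrt (Ecoef zu u v)) D = T u v.
Definition nabla_y_eq (U : R -> R -> Prop) (zv W T : R -> R -> V4) : Prop :=
  forall u v, U u v -> exists D, pdv4 W u v D /\
    vscale (/ sqrt (Gcoef zv u v)) D = T u v.

Definition lc2 (f : R -> R -> R) (X : R -> R -> V4) (g : R -> R -> R) (Y : R -> R -> V4)
  : R -> R -> V4 := fun u v => vadd (vscale (f u v) (X u v)) (vscale (g u v) (Y u v)).
Definition neg (f : R -> R -> R) : R -> R -> R := fun u v => - f u v.

(** {x,y,n1,n2} is the geometric frame of the surface (with invariants
    nu, mu, g1 = gamma_1, g2 = gamma_2, b1 = beta_1, b2 = beta_2). *)
Definition geometric_frame (U : R -> R -> Prop) (zu zv x y n1 n2 : R -> R -> V4)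
  (nu mu g1 g2 b1 b2 : R -> R -> R) : Prop :=
  smooth4 U x /\ smooth4 U y /\ smooth4 U n1 /\ smooth4 U n2 /\
  smooth2 U nu /\ smooth2 U mu /\ smooth2 U g1 /\ smooth2 U g2 /\
  smooth2 U b1 /\ smooth2 U b2 /\
  (forall u v, U u v ->
     vdot (x u v) (x u v) = 1 /\ vdot (y u v) (y u v) = 1 /\
     vdot (n1 u v) (n1 u v) = 1 /\ vdot (n2 u v) (n2 u v) = 1 /\
     vdot (x u v) (y u v) = 0 /\ vdot (x u v) (n1 u v) = 0 /\
     vdot (x u v) (n2 u v) = 0 /\ vdot (y u v) (n1 u v) = 0 /\
     vdot (y u v) (n2 u v) = 0 /\ vdot (n1 u v) (n2 u v) = 0 /\
     0 < det4 (x u v) (y u v) (n1 u v) (n2 u v) /\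
     0 < mu u v /\ nu u v <> 0 /\ mu u v ^ 2 <> nu u v ^ 2) /\
  nabla_x_eq U zu x (lc2 g1 y nu n1) /\
  nabla_x_eq U zu y (lc2 (neg g1) x mu n2) /\
  nabla_y_eq U zv x (lc2 (neg g2) y mu n2) /\
  nabla_y_eq U zv y (lc2 g2 x (neg nu) n1) /\
  nabla_x_eq U zu n1 (lc2 (neg nu) x b1 n2) /\
  nabla_y_eq U zv n1 (lc2 nu y b2 n2) /\
  nabla_x_eq U zu n2 (lc2 (neg mu) y (neg b1) n1) /\
  nabla_y_eq U zv n2 (lc2 (neg mu) x (neg b2) n1).

(* Main.v *)
Require Import Defs.
From Stdlib Require Import Reals Lra.
Import Defs.
Open Scope R_scope.


Lemma dl_ext f g x l : derivable_pt_lim f x l ->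
  (exists r, 0 < r /\ forall t, Rabs (t - x) < r -> f t = g t) ->
  derivable_pt_lim g x l.
Proof.
  intros Hf [r [Hr Heq]] eps Heps.
  destruct (Hf eps Heps) as [del Hdel].
  assert (Hm : 0 < Rmin del r) by (apply Rmin_pos; [apply (cond_pos del)|lra]).
  exists (mkposreal _ Hm). intros h Hh Hhl. simpl in Hhl.
  rewrite <- (Heq x), <- (Heq (x+h)).
  - apply Hdel; auto. apply Rlt_le_trans with (1 := Hhl). apply Rmin_l.
  - replace (x + h - x) with h by ring. apply Rlt_le_trans with (1 := Hhl). apply Rmin_r.
  - replace (x - x) with 0 by ring. rewrite Rabs_R0. lra.
Qed.

Lemma rect_nv a b c d u v : rect a b c d u v ->
  exists r, 0 < r /\ forall t, Rabs (t - v) < r -> rect a b c d u t.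
Proof.
  intros [Hu Hv]. exists (Rmin (v - c) (d - v)). split.
  - apply Rmin_pos; lra.
  - intros t Ht. split; auto. apply Rabs_def2 in Ht.
    pose proof (Rmin_l (v-c) (d-v)). pose proof (Rmin_r (v-c) (d-v)). lra.
Qed.

Lemma rect_nu a b c d u v : rect a b c d u v ->
  exists r, 0 < r /\ forall t, Rabs (t - u) < r -> rect a b c d t v.
Proof.
  intros [Hu Hv]. exists (Rmin (u - a) (b - u)). split.
  - apply Rmin_pos; lra.
  - intros t Ht. split; auto. apply Rabs_def2 in Ht.
    pose proof (Rmin_l (u-a) (b-u)). pose proof (Rmin_r (u-a) (b-u)). lra.
Qed.

Lemma dl_ext_v a b c d u v f g l : rect a b c d u v ->
  (forall t, rect a b c d u t -> f t = g t) ->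
  derivable_pt_lim f v l -> derivable_pt_lim g v l.
Proof.
  intros Hr He Hf. apply (dl_ext f); auto.
  destruct (rect_nv _ _ _ _ _ _ Hr) as [r [Hr0 Hr1]]. exists r. split; auto.
Qed.

Lemma dl_ext_u a b c d u v f g l : rect a b c d u v ->
  (forall t, rect a b c d t v -> f t = g t) ->
  derivable_pt_lim f u l -> derivable_pt_lim g u l.
Proof.
  intros Hr He Hf. apply (dl_ext f); auto.
  destruct (rect_nu _ _ _ _ _ _ Hr) as [r [Hr0 Hr1]]. exists r. split; auto.
Qed.

Lemma dl_uniq_ext f g x l1 l2 : derivable_pt_lim f x l1 -> derivable_pt_lim g x l2 ->
  (exists r, 0 < r /\ forall t, Rabs (t - x) < r -> f t = g t) -> l1 = l2.
Proof.
  intros H1 H2 H3. apply (uniqueness_limite g x); auto. apply (dl_ext f); auto.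
Qed.

Lemma smooth2_cont U f : smooth2 U f -> cont2 U f.
Proof. intros []; auto. Qed.

Lemma smooth2_du U f : smooth2 U f ->
  exists fu, (forall u v, U u v -> pdu f u v (fu u v)) /\ smooth2 U fu.
Proof. intros [fu fv H1 H2 H3 H4 H5]. eauto. Qed.

Lemma smooth2_dv U f : smooth2 U f ->
  exists fv, (forall u v, U u v -> pdv f u v (fv u v)) /\ smooth2 U fv.
Proof. intros [fu fv H1 H2 H3 H4 H5]. eauto. Qed.

Lemma small_zero x : (forall eps, 0 < eps -> Rabs x < 2 * eps) -> x = 0.
Proof.
  intros H. destruct (Req_dec x 0) as [|Hx]; auto.
  assert (Hp : 0 < Rabs x) by (apply Rabs_pos_lt; auto).
  specialize (H (Rabs x / 2) ltac:(lra)). lra.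
Qed.

Lemma ln_abs_deriv f x l : derivable_pt_lim f x l -> f x <> 0 ->
  derivable_pt_lim (fun t => ln (Rabs (f t))) x (l / f x).
Proof.
  intros Hf Hne.
  destruct (Rlt_or_le 0 (f x)) as [Hp|Hn].
  - assert (H1 := derivable_pt_lim_comp f Rabs x l 1 Hf (Rabs_derive_1 _ Hp)).
    assert (Ha : 0 < Rabs (f x)) by (apply Rabs_pos_lt; auto).
    assert (H2 := derivable_pt_lim_comp (comp Rabs f) ln x _ _ H1 (derivable_pt_lim_ln _ Ha)).
    unfold comp in H2. rewrite Rabs_right in H2 by lra.
    replace (l / f x) with (/ f x * (1 * l)) by (field; auto). exact H2.
  - assert (Hn' : f x < 0) by lra.
    assert (H1 := derivable_pt_lim_comp f Rabs x l (-1) Hf (Rabs_derive_2 _ Hn')).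
    assert (Ha : 0 < Rabs (f x)) by (apply Rabs_pos_lt; auto).
    assert (H2 := derivable_pt_lim_comp (comp Rabs f) ln x _ _ H1 (derivable_pt_lim_ln _ Ha)).
    unfold comp in H2. rewrite Rabs_left in H2 by lra.
    replace (l / f x) with (/ - f x * (-1 * l)) by (field; auto). exact H2.
Qed.

Lemma const_1d g c d v v' : c < v < d -> c < v' < d ->
  (forall t, c < t < d -> derivable_pt_lim g t 0) -> g v = g v'.
Proof.
  intros Hv Hv' H.
  destruct (total_order_T v v') as [[Hl|He]|Hg].
  - destruct (MVT_cor2 g (fun _ => 0) v v' Hl) as [x [Hx _]].
    + intros t Ht. apply H. lra.
    + lra.
  - subst; auto.
  - destruct (MVT_cor2 g (fun _ => 0) v' v Hg) as [x [Hx _]].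
    + intros t Ht. apply H. lra.
    + lra.
Qed.

Lemma deriv_const_zero g x l r : derivable_pt_lim g x l -> 0 < r ->
  (forall t, Rabs (t - x) < r -> g t = g x) -> l = 0.
Proof.
  intros Hg Hr He. apply (dl_uniq_ext g (fct_cte (g x)) x); auto.
  - apply derivable_pt_lim_const.
  - exists r; split; auto.
Qed.

Lemma schwarz_pt a b c d f : smooth2 (rect a b c d) f ->
  forall fu fv fuv fvu,
  (forall u v, rect a b c d u v -> pdu f u v (fu u v)) ->
  (forall u v, rect a b c d u v -> pdv f u v (fv u v)) ->
  (forall u v, rect a b c d u v -> pdv fu u v (fuv u v)) ->
  (forall u v, rect a b c d u v -> pdu fv u v (fvu u v)) ->
  cont2 (rect a b c d) fuv -> cont2 (rect a b c d) fvu ->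
  forall u v, rect a b c d u v -> fuv u v = fvu u v.
Proof.
  intros Hs fu fv fuv fvu Hu Hv Huv Hvu C1 C2 u v Hr.
  apply Rminus_diag_uniq. apply small_zero. intros eps Heps.
  destruct (C1 u v Hr eps Heps) as [d1 [Hd1 H1]].
  destruct (C2 u v Hr eps Heps) as [d2 [Hd2 H2]].
  destruct Hr as [[Hau Hub] [Hcv Hvd]].
  set (h := Rmin (Rmin d1 d2) (Rmin (b - u) (d - v)) / 2).
  assert (Hm1 := Rmin_l (Rmin d1 d2) (Rmin (b - u) (d - v))).
  assert (Hm2 := Rmin_r (Rmin d1 d2) (Rmin (b - u) (d - v))).
  assert (Hm3 := Rmin_l d1 d2). assert (Hm4 := Rmin_r d1 d2).
  assert (Hm5 := Rmin_l (b-u) (d-v)). assert (Hm6 := Rmin_r (b-u) (d-v)).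
  assert (Hpos : 0 < Rmin (Rmin d1 d2) (Rmin (b - u) (d - v))).
  { apply Rmin_pos; apply Rmin_pos; lra. }
  assert (Hh : 0 < h) by (unfold h; lra).
  assert (Hh1 : h < d1) by (unfold h; lra).
  assert (Hh2 : h < d2) by (unfold h; lra).
  assert (Hh3 : u + h < b) by (unfold h; lra).
  assert (Hh4 : v + h < d) by (unfold h; lra).
  assert (Hin : forall s t, u <= s <= u + h -> v <= t <= v + h -> rect a b c d s t).
  { intros s t Hs1 Ht1. split; lra. }
  destruct (MVT_cor2 (fun s => f s (v+h) - f s v) (fun s => fu s (v+h) - fu s v) u (u+h))
    as [xi [Exi Hxi]]; [lra| |].
  { intros s Hs1. apply derivable_pt_lim_minus.
    - apply (Hu s (v+h)). apply Hin; lra.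
    - apply (Hu s v). apply Hin; lra. }
  destruct (MVT_cor2 (fun t => fu xi t) (fun t => fuv xi t) v (v+h))
    as [eta [Eeta Heta]]; [lra| |].
  { intros t Ht. apply (Huv xi t). apply Hin; lra. }
  destruct (MVT_cor2 (fun t => f (u+h) t - f u t) (fun t => fv (u+h) t - fv u t) v (v+h))
    as [eta' [Eeta' Heta']]; [lra| |].
  { intros t Ht. apply derivable_pt_lim_minus.
    - apply (Hv (u+h) t). apply Hin; lra.
    - apply (Hv u t). apply Hin; lra. }
  destruct (MVT_cor2 (fun s => fv s eta') (fun s => fvu s eta') u (u+h))
    as [xi' [Exi' Hxi']]; [lra| |].
  { intros s Hs1. apply (Hvu s eta'). apply Hin; lra. }
  assert (Heq : fuv xi eta = fvu xi' eta').
  { assert (E : fuv xi eta * (h * h) = fvu xi' eta' * (h * h)).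
    { replace (u + h - u) with h in * by ring. replace (v + h - v) with h in * by ring.
      transitivity ((fu xi (v + h) - fu xi v) * h). rewrite Eeta. ring.
      rewrite <- Exi. transitivity ((fv (u + h) eta' - fv u eta') * h).
      2: rewrite Exi'; ring. rewrite <- Eeta'. ring. }
    apply Rmult_eq_reg_r with (h*h); auto. apply Rgt_not_eq. nra. }
  assert (A1 := H1 xi eta ltac:(apply Hin; lra)
                  ltac:(apply Rabs_def1; lra) ltac:(apply Rabs_def1; lra)).
  assert (A2 := H2 xi' eta' ltac:(apply Hin; lra)
                  ltac:(apply Rabs_def1; lra) ltac:(apply Rabs_def1; lra)).
  rewrite Heq in A1.
  apply Rabs_def2 in A1. apply Rabs_def2 in A2. apply Rabs_def1; lra.
Qed.

Lemma schwarz a b c d f : smooth2 (rect a b c d) f ->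
  forall P Q, (forall u v, rect a b c d u v -> pdu f u v (P u v)) ->
  (forall u v, rect a b c d u v -> pdv f u v (Q u v)) ->
  forall u v, rect a b c d u v -> exists L, pdv P u v L /\ pdu Q u v L.
Proof.
  intros Hs P Q HP HQ u v Hr.
  destruct (smooth2_du _ _ Hs) as [fu [Hfu Sfu]].
  destruct (smooth2_dv _ _ Hs) as [fv [Hfv Sfv]].
  destruct (smooth2_dv _ _ Sfu) as [fuv [Hfuv Sfuv]].
  destruct (smooth2_du _ _ Sfv) as [fvu [Hfvu Sfvu]].
  assert (EP : forall s t, rect a b c d s t -> fu s t = P s t).
  { intros s t Hst. apply (uniqueness_limite (fun x => f x t) s); [apply Hfu|apply HP]; auto. }
  assert (EQ : forall s t, rect a b c d s t -> fv s t = Q s t).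
  { intros s t Hst. apply (uniqueness_limite (fun x => f s x) t); [apply Hfv|apply HQ]; auto. }
  exists (fuv u v). split.
  - unfold pdv. apply (dl_ext_v a b c d u v (fun t => fu u t)); auto.
    apply Hfuv; auto.
  - rewrite (schwarz_pt a b c d f Hs fu fv fuv fvu Hfu Hfv Hfuv Hfvu
      (smooth2_cont _ _ Sfuv) (smooth2_cont _ _ Sfvu) u v Hr).
    unfold pdu. apply (dl_ext_u a b c d u v (fun s => fv s v)); auto.
    apply Hfvu; auto.
Qed.

Definition dl4 (P : R -> V4) x (D : V4) : Prop :=
  derivable_pt_lim (fun t => c1 (P t)) x (c1 D) /\ derivable_pt_lim (fun t => c2 (P t)) x (c2 D) /\
  derivable_pt_lim (fun t => c3 (P t)) x (c3 D) /\ derivable_pt_lim (fun t => c4 (P t)) x (c4 D).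

Lemma dot_deriv P K x DP DK : dl4 P x DP -> dl4 K x DK ->
  derivable_pt_lim (fun t => vdot (P t) (K t)) x (vdot DP (K x) + vdot (P x) DK).
Proof.
  intros (P1&P2&P3&P4) (K1&K2&K3&K4).
  assert (H := derivable_pt_lim_plus _ _ _ _ _
    (derivable_pt_lim_plus _ _ _ _ _
      (derivable_pt_lim_plus _ _ _ _ _ (derivable_pt_lim_mult _ _ _ _ _ P1 K1)
         (derivable_pt_lim_mult _ _ _ _ _ P2 K2))
      (derivable_pt_lim_mult _ _ _ _ _ P3 K3))
    (derivable_pt_lim_mult _ _ _ _ _ P4 K4)).
  unfold vdot. replace (c1 DP * c1 (K x) + c2 DP * c2 (K x) + c3 DP * c3 (K x) + c4 DP * c4 (K x) +
    (c1 (P x) * c1 DK + c2 (P x) * c2 DK + c3 (P x) * c3 DK + c4 (P x) * c4 DK))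
  with (c1 DP * c1 (K x) + c1 (P x) * c1 DK + (c2 DP * c2 (K x) + c2 (P x) * c2 DK) +
     (c3 DP * c3 (K x) + c3 (P x) * c3 DK) + (c4 DP * c4 (K x) + c4 (P x) * c4 DK)) by ring.
  exact H.
Qed.

Lemma codazzi a b c d W P Q K u v Ku Kv :
  smooth4 (rect a b c d) W ->
  (forall u v, rect a b c d u v -> pdu4 W u v (P u v)) ->
  (forall u v, rect a b c d u v -> pdv4 W u v (Q u v)) ->
  rect a b c d u v -> pdu4 K u v Ku -> pdv4 K u v Kv ->
  exists Dv Du, derivable_pt_lim (fun t => vdot (P u t) (K u t)) v Dv /\
    derivable_pt_lim (fun s => vdot (Q s v) (K s v)) u Du /\
    Dv - Du = vdot (P u v) Kv - vdot (Q u v) Ku.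
Proof.
  intros (S1&S2&S3&S4) HP HQ Hr HKu HKv.
  destruct (schwarz _ _ _ _ _ S1 (fun s t => c1 (P s t)) (fun s t => c1 (Q s t))
    ltac:(intros; apply HP; auto) ltac:(intros; apply HQ; auto) u v Hr) as [L1 [A1 B1]].
  destruct (schwarz _ _ _ _ _ S2 (fun s t => c2 (P s t)) (fun s t => c2 (Q s t))
    ltac:(intros; apply HP; auto) ltac:(intros; apply HQ; auto) u v Hr) as [L2 [A2 B2]].
  destruct (schwarz _ _ _ _ _ S3 (fun s t => c3 (P s t)) (fun s t => c3 (Q s t))
    ltac:(intros; apply HP; auto) ltac:(intros; apply HQ; auto) u v Hr) as [L3 [A3 B3]].
  destruct (schwarz _ _ _ _ _ S4 (fun s t => c4 (P s t)) (fun s t => c4 (Q s t))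
    ltac:(intros; apply HP; auto) ltac:(intros; apply HQ; auto) u v Hr) as [L4 [A4 B4]].
  set (L := mkV4 L1 L2 L3 L4).
  exists (vdot L (K u v) + vdot (P u v) Kv), (vdot L (K u v) + vdot (Q u v) Ku).
  split; [|split].
  - apply (dot_deriv (fun t => P u t) (fun t => K u t)); [|exact HKv].
    repeat split; assumption.
  - apply (dot_deriv (fun s => Q s v) (fun s => K s v)); [|exact HKu].
    repeat split; assumption.
  - ring.
Qed.

Lemma vdot_comm p q : vdot p q = vdot q p.
Proof. unfold vdot; ring. Qed.
Lemma vdot_addl p q r : vdot (vadd p q) r = vdot p r + vdot q r.
Proof. unfold vdot, vadd; simpl; ring. Qed.
Lemma vdot_addr p q r : vdot r (vadd p q) = vdot r p + vdot r q.
Proof. unfold vdot, vadd; simpl; ring. Qed.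
Lemma vdot_scl k p q : vdot (vscale k p) q = k * vdot p q.
Proof. unfold vdot, vscale; simpl; ring. Qed.
Lemma vdot_scr k p q : vdot q (vscale k p) = k * vdot q p.
Proof. unfold vdot, vscale; simpl; ring. Qed.
Lemma vscale_inv k p : k <> 0 -> vscale k (vscale (/ k) p) = p.
Proof. intros; destruct p; unfold vscale; simpl; f_equal; field; auto. Qed.

Definition sqE (zu : R -> R -> V4) u v := sqrt (Ecoef zu u v).
Definition sqG (zv : R -> R -> V4) u v := sqrt (Gcoef zv u v).

Lemma nabla_x_fun U zu W T : nabla_x_eq U zu W T -> (forall u v, U u v -> 0 < Ecoef zu u v) ->
  forall u v, U u v -> pdu4 W u v (vscale (sqE zu u v) (T u v)).
Proof.
  intros H HE u v Hu. destruct (H u v Hu) as [D [HD E]]. rewrite <- E. unfold sqE, sqG.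
  rewrite vscale_inv; auto. apply Rgt_not_eq. apply sqrt_lt_R0. auto.
Qed.
Lemma nabla_y_fun U zv W T : nabla_y_eq U zv W T -> (forall u v, U u v -> 0 < Gcoef zv u v) ->
  forall u v, U u v -> pdv4 W u v (vscale (sqG zv u v) (T u v)).
Proof.
  intros H HE u v Hu. destruct (H u v Hu) as [D [HD E]]. rewrite <- E. unfold sqE, sqG.
  rewrite vscale_inv; auto. apply Rgt_not_eq. apply sqrt_lt_R0. auto.
Qed.

Lemma codazzi2 a b c d W P Q K u v Ku Kv (p q : R -> R) lp lq :
  smooth4 (rect a b c d) W ->
  (forall u v, rect a b c d u v -> pdu4 W u v (P u v)) ->
  (forall u v, rect a b c d u v -> pdv4 W u v (Q u v)) ->
  rect a b c d u v -> pdu4 K u v Ku -> pdv4 K u v Kv ->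
  (forall t, rect a b c d u t -> vdot (P u t) (K u t) = p t) ->
  (forall s, rect a b c d s v -> vdot (Q s v) (K s v) = q s) ->
  derivable_pt_lim p v lp -> derivable_pt_lim q u lq ->
  lp - lq = vdot (P u v) Kv - vdot (Q u v) Ku.
Proof.
  intros HW HP HQ Hr HKu HKv Ep Eq Dp Dq.
  destruct (codazzi a b c d W P Q K u v Ku Kv HW HP HQ Hr HKu HKv) as [Dv [Du [H1 [H2 H3]]]].
  rewrite <- H3. f_equal.
  - apply (uniqueness_limite p v); auto. apply (dl_ext_v a b c d u v _ _ _ Hr Ep H1).
  - apply (uniqueness_limite q u); auto. apply (dl_ext_u a b c d u v _ _ _ Hr Eq H2).
Qed.


Lemma ln_sqrt_ratio p q : p <> 0 -> q <> 0 ->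
  ln (sqrt (Rabs (p / q))) = / 2 * (ln (Rabs p) - ln (Rabs q)).
Proof.
  intros Hp Hq.
  assert (P1 : 0 < Rabs p) by (apply Rabs_pos_lt; auto).
  assert (P2 : 0 < Rabs q) by (apply Rabs_pos_lt; auto).
  assert (P3 : 0 < Rabs (p / q)).
  { apply Rabs_pos_lt. unfold Rdiv. apply Rmult_integral_contrapositive; split; auto.
    apply Rinv_neq_0_compat; auto. }
  assert (P4 : 0 < sqrt (Rabs (p / q))) by (apply sqrt_lt_R0; auto).
  assert (E : ln (Rabs (p / q)) = 2 * ln (sqrt (Rabs (p / q)))).
  { rewrite <- (sqrt_sqrt (Rabs (p / q))) at 1 by lra. rewrite ln_mult by auto. ring. }
  assert (E2 : ln (Rabs (p / q)) = ln (Rabs p) - ln (Rabs q)).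
  { unfold Rdiv. rewrite Rabs_mult, Rabs_inv, ln_mult, ln_Rinv; auto.
    apply Rinv_0_lt_compat; auto. }
  lra.
Qed.

Lemma sq_deriv f x l : derivable_pt_lim f x l ->
  derivable_pt_lim (fun t => f t ^ 2) x (2 * f x * l).
Proof.
  intros H. apply (dl_ext (fun t => f t * f t)).
  - replace (2 * f x * l) with (l * f x + f x * l) by ring.
    exact (derivable_pt_lim_mult _ _ _ _ _ H H).
  - exists 1; split; [lra|]. intros; ring.
Qed.

Ltac fr Hon x y n1 n2 s t H :=
  destruct (Hon s t H) as (Hxx&Hyy&H11&H22&Hxy&Hx1&Hx2&Hy1&Hy2&H12&_&_&_&_);
  unfold lc2, neg;
  repeat (rewrite ?vdot_addl, ?vdot_addr, ?vdot_scl, ?vdot_scr);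
  rewrite ?(vdot_comm (y s t) (x s t)), ?(vdot_comm (n1 s t) (x s t)),
    ?(vdot_comm (n2 s t) (x s t)), ?(vdot_comm (n1 s t) (y s t)),
    ?(vdot_comm (n2 s t) (y s t)), ?(vdot_comm (n2 s t) (n1 s t));
  rewrite ?Hxx, ?Hyy, ?H11, ?H22, ?Hxy, ?Hx1, ?Hx2, ?Hy1, ?Hy2, ?H12.

Theorem mainTheorem11 (a b c d : R) (z zu zv x y n1 n2 : R -> R -> V4)
  (nu mu g1 g2 b1 b2 : R -> R -> R) :
  a < b -> c < d ->
  semi_canonical (rect a b c d) z zu zv x y ->
  geometric_frame (rect a b c d) zu zv x y n1 n2 nu mu g1 g2 b1 b2 ->
  (forall u v, rect a b c d u v -> g1 u v = 0) ->
  (forall u v v', rect a b c d u v -> rect a b c d u v' ->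
     Ecoef zu u v = Ecoef zu u v' /\ mu u v = mu u v' /\ nu u v = nu u v' /\
     g2 u v = g2 u v' /\ b2 u v = b2 u v') /\
  (forall u v, rect a b c d u v -> b1 u v = 0) /\
  (forall u v, rect a b c d u v ->
     exists D, derivable_pt_lim
                 (fun t => ln (Rabs (mu t v ^ 2 - nu t v ^ 2))) u D /\
               g2 u v = / (4 * sqrt (Ecoef zu u v)) * D) /\
  (forall u v, rect a b c d u v ->
     exists D, derivable_pt_lim
                 (fun t => ln (sqrt (Rabs ((mu t v + nu t v) / (mu t v - nu t v))))) u D /\
               b2 u v = / sqrt (Ecoef zu u v) * D).
Proof.
  intros Hab Hcd [Sz Hsc] Hgf Hg1.
  destruct Hgf as (Sx&Sy&Sn1&Sn2&Snu&Smu&Sg1&Sg2&Sb1&Sb2&Hon&Nxx&Nxy&Nyx&Nyy&N1x&N1y&N2x&N2y).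
  assert (HE : forall u v, rect a b c d u v -> 0 < Ecoef zu u v) by (intros; apply Hsc; auto).
  assert (HG : forall u v, rect a b c d u v -> 0 < Gcoef zv u v) by (intros; apply Hsc; auto).
  assert (Apos : forall u v, rect a b c d u v -> 0 < sqE zu u v)
    by (intros; unfold sqE; apply sqrt_lt_R0; auto).
  assert (Bpos : forall u v, rect a b c d u v -> 0 < sqG zv u v)
    by (intros; unfold sqG; apply sqrt_lt_R0; auto).
  pose proof (nabla_x_fun _ _ _ _ Nxx HE) as DXu.
  pose proof (nabla_x_fun _ _ _ _ Nxy HE) as DYu.
  pose proof (nabla_y_fun _ _ _ _ Nyx HG) as DXv.
  pose proof (nabla_y_fun _ _ _ _ Nyy HG) as DYv.
  pose proof (nabla_x_fun _ _ _ _ N1x HE) as DN1u.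
  pose proof (nabla_y_fun _ _ _ _ N1y HG) as DN1v.
  pose proof (nabla_x_fun _ _ _ _ N2x HE) as DN2u.
  pose proof (nabla_y_fun _ _ _ _ N2y HG) as DN2v.
  set (A := sqE zu) in *. set (B := sqG zv) in *.
  assert (PZu : forall u v, rect a b c d u v -> pdu4 z u v (zu u v)) by (intros; apply Hsc; auto).
  assert (PZv : forall u v, rect a b c d u v -> pdv4 z u v (zv u v)) by (intros; apply Hsc; auto).
  assert (Fzu : forall u v, rect a b c d u v -> zu u v = vscale (A u v) (x u v)).
  { intros u v Hr. destruct (Hsc u v Hr) as (_&_&_&_&_&Hx&_). rewrite Hx.
    unfold A, sqE. rewrite vscale_inv; auto. apply Rgt_not_eq, sqrt_lt_R0; auto. }
  assert (Fzv : forall u v, rect a b c d u v -> zv u v = vscale (B u v) (y u v)).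
  { intros u v Hr. destruct (Hsc u v Hr) as (_&_&_&_&_&_&Hy). rewrite Hy.
    unfold B, sqG. rewrite vscale_inv; auto. apply Rgt_not_eq, sqrt_lt_R0; auto. }

  assert (Av : forall u v, rect a b c d u v -> derivable_pt_lim (fun t => A u t) v 0).
  { intros u v Hr.
    destruct (codazzi a b c d z zu zv x u v _ _ Sz PZu PZv Hr (DXu u v Hr) (DXv u v Hr))
      as [Dv [Du [H1 [H2 H3]]]].
    assert (E1 : derivable_pt_lim (fun t => A u t) v Dv).
    { apply (dl_ext_v a b c d u v _ _ _ Hr) with (2 := H1). intros t Ht.
      rewrite (Fzu u t Ht). fr Hon x y n1 n2 u t Ht. ring. }
    assert (E2 : Du = 0).
    { apply (uniqueness_limite (fun s => vdot (zv s v) (x s v)) u); auto.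
      apply (dl_ext_u a b c d u v (fct_cte 0) _ _ Hr); [|apply derivable_pt_lim_const].
      intros s Hs. rewrite (Fzv s v Hs). fr Hon x y n1 n2 s v Hs. unfold fct_cte; ring. }
    replace 0 with Dv; auto.
    rewrite (Fzu u v Hr), (Fzv u v Hr) in H3. revert H3. fr Hon x y n1 n2 u v Hr.
    rewrite (Hg1 u v Hr). intro H3. lra. }
  assert (Bu : forall u v, rect a b c d u v ->
     derivable_pt_lim (fun s => B s v) u (- (A u v * B u v * g2 u v))).
  { intros u v Hr.
    destruct (codazzi a b c d z zu zv y u v _ _ Sz PZu PZv Hr (DYu u v Hr) (DYv u v Hr))
      as [Dv [Du [H1 [H2 H3]]]].
    assert (E1 : derivable_pt_lim (fun s => B s v) u Du).
    { apply (dl_ext_u a b c d u v _ _ _ Hr) with (2 := H2). intros s Hs.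
      rewrite (Fzv s v Hs). fr Hon x y n1 n2 s v Hs. ring. }
    assert (E2 : Dv = 0).
    { apply (uniqueness_limite (fun t => vdot (zu u t) (y u t)) v); auto.
      apply (dl_ext_v a b c d u v (fct_cte 0) _ _ Hr); [|apply derivable_pt_lim_const].
      intros t Ht. rewrite (Fzu u t Ht). fr Hon x y n1 n2 u t Ht. unfold fct_cte; ring. }
    replace (- (A u v * B u v * g2 u v)) with Du; auto.
    rewrite (Fzu u v Hr), (Fzv u v Hr) in H3. revert H3. fr Hon x y n1 n2 u v Hr.
    rewrite (Hg1 u v Hr). intro H3. lra. }

  destruct (smooth2_dv _ _ Snu) as [nuV [HnuV _]].
  destruct (smooth2_du _ _ Snu) as [nuU [HnuU _]].
  destruct (smooth2_dv _ _ Smu) as [muV [HmuV _]].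
  destruct (smooth2_du _ _ Smu) as [muU [HmuU _]].
  destruct (smooth2_du _ _ Sg2) as [g2U [Hg2U _]].
  assert (Dnuv : forall u v, rect a b c d u v -> nuV u v = - (B u v * b1 u v * mu u v)).
  { intros u v Hr.
    assert (E := codazzi2 a b c d n1 _ _ x u v _ _ (fun t => - (A u t * nu u t)) (fct_cte 0) _ _
      Sn1 DN1u DN1v Hr (DXu u v Hr) (DXv u v Hr)
      ltac:(intros t Ht; fr Hon x y n1 n2 u t Ht; ring)
      ltac:(intros s Hs; fr Hon x y n1 n2 s v Hs; unfold fct_cte; ring)
      (derivable_pt_lim_opp _ _ _ (derivable_pt_lim_mult _ _ _ _ _ (Av u v Hr) (HnuV u v Hr)))
      (derivable_pt_lim_const 0 u)).
    revert E. fr Hon x y n1 n2 u v Hr. rewrite (Hg1 u v Hr). intro E.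
    apply Rmult_eq_reg_l with (A u v); [|apply Rgt_not_eq, Apos; auto]. lra. }
  assert (Dmuv : forall u v, rect a b c d u v -> muV u v = - (B u v * nu u v * b1 u v)).
  { intros u v Hr.
    assert (E := codazzi2 a b c d y _ _ n2 u v _ _ (fun t => A u t * mu u t) (fct_cte 0) _ _
      Sy DYu DYv Hr (DN2u u v Hr) (DN2v u v Hr)
      ltac:(intros t Ht; fr Hon x y n1 n2 u t Ht; ring)
      ltac:(intros s Hs; fr Hon x y n1 n2 s v Hs; unfold fct_cte; ring)
      (derivable_pt_lim_mult _ _ _ _ _ (Av u v Hr) (HmuV u v Hr))
      (derivable_pt_lim_const 0 u)).
    revert E. fr Hon x y n1 n2 u v Hr. rewrite (Hg1 u v Hr). intro E.
    apply Rmult_eq_reg_l with (A u v); [|apply Rgt_not_eq, Apos; auto]. lra. }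
  assert (Dmuu : forall u v, rect a b c d u v ->
     muU u v = A u v * (nu u v * b2 u v + 2 * g2 u v * mu u v)).
  { intros u v Hr.
    assert (E := codazzi2 a b c d x _ _ n2 u v _ _ (fct_cte 0) (fun s => B s v * mu s v) _ _
      Sx DXu DXv Hr (DN2u u v Hr) (DN2v u v Hr)
      ltac:(intros t Ht; fr Hon x y n1 n2 u t Ht; unfold fct_cte; ring)
      ltac:(intros s Hs; fr Hon x y n1 n2 s v Hs; ring)
      (derivable_pt_lim_const 0 v)
      (derivable_pt_lim_mult _ _ _ _ _ (Bu u v Hr) (HmuU u v Hr))).
    revert E. fr Hon x y n1 n2 u v Hr. rewrite (Hg1 u v Hr). intro E.
    apply Rmult_eq_reg_l with (B u v); [|apply Rgt_not_eq, Bpos; auto]. lra. }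
  assert (Dnuu : forall u v, rect a b c d u v ->
     nuU u v = A u v * (mu u v * b2 u v + 2 * g2 u v * nu u v)).
  { intros u v Hr.
    assert (E := codazzi2 a b c d y _ _ n1 u v _ _ (fct_cte 0) (fun s => - (B s v * nu s v)) _ _
      Sy DYu DYv Hr (DN1u u v Hr) (DN1v u v Hr)
      ltac:(intros t Ht; fr Hon x y n1 n2 u t Ht; rewrite (Hg1 u t Ht); unfold fct_cte; ring)
      ltac:(intros s Hs; fr Hon x y n1 n2 s v Hs; ring)
      (derivable_pt_lim_const 0 v)
      (derivable_pt_lim_opp _ _ _ (derivable_pt_lim_mult _ _ _ _ _ (Bu u v Hr) (HnuU u v Hr)))).
    revert E. fr Hon x y n1 n2 u v Hr. rewrite (Hg1 u v Hr). intro E.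
    apply Rmult_eq_reg_l with (B u v); [|apply Rgt_not_eq, Bpos; auto]. lra. }
  assert (Dg2u : forall u v, rect a b c d u v ->
     g2U u v = A u v * (g2 u v ^ 2 - mu u v ^ 2 - nu u v ^ 2)).
  { intros u v Hr.
    assert (E := codazzi2 a b c d x _ _ y u v _ _ (fct_cte 0) (fun s => - (B s v * g2 s v)) _ _
      Sx DXu DXv Hr (DYu u v Hr) (DYv u v Hr)
      ltac:(intros t Ht; fr Hon x y n1 n2 u t Ht; rewrite (Hg1 u t Ht); unfold fct_cte; ring)
      ltac:(intros s Hs; fr Hon x y n1 n2 s v Hs; ring)
      (derivable_pt_lim_const 0 v)
      (derivable_pt_lim_opp _ _ _ (derivable_pt_lim_mult _ _ _ _ _ (Bu u v Hr) (Hg2U u v Hr)))).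
    revert E. fr Hon x y n1 n2 u v Hr. rewrite (Hg1 u v Hr). intro E.
    apply Rmult_eq_reg_l with (B u v); [|apply Rgt_not_eq, Bpos; auto]. lra. }

  assert (Aconst : forall u v v', rect a b c d u v -> rect a b c d u v' -> A u v = A u v').
  { intros u v v' [Hu Hv] [_ Hv'].
    apply (const_1d (fun t => A u t) c d); auto. intros t Ht. apply Av. split; auto. }
  assert (Hmn : forall u v, rect a b c d u v -> mu u v ^ 2 - nu u v ^ 2 <> 0).
  { intros u v Hr. destruct (Hon u v Hr) as (_&_&_&_&_&_&_&_&_&_&_&_&_&H). lra. }
  assert (fconst : forall u v v', rect a b c d u v -> rect a b c d u v' ->
     mu u v ^ 2 - nu u v ^ 2 = mu u v' ^ 2 - nu u v' ^ 2).
  { intros u v v' [Hu Hv] [_ Hv'].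
    apply (const_1d (fun t => mu u t ^ 2 - nu u t ^ 2) c d); auto. intros t Ht.
    assert (Hr : rect a b c d u t) by (split; auto).
    assert (D := derivable_pt_lim_minus _ _ _ _ _ (sq_deriv _ _ _ (HmuV u t Hr))
                                              (sq_deriv _ _ _ (HnuV u t Hr))).
    rewrite (Dmuv u t Hr), (Dnuv u t Hr) in D.
    replace 0 with (2 * mu u t * - (B u t * nu u t * b1 u t) -
                    2 * nu u t * - (B u t * b1 u t * mu u t)) by ring. exact D. }
  assert (fu : forall u v, rect a b c d u v ->
     derivable_pt_lim (fun s => mu s v ^ 2 - nu s v ^ 2) u
       (4 * A u v * g2 u v * (mu u v ^ 2 - nu u v ^ 2))).
  { intros u v Hr.
    assert (D := derivable_pt_lim_minus _ _ _ _ _ (sq_deriv _ _ _ (HmuU u v Hr))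
                                              (sq_deriv _ _ _ (HnuU u v Hr))).
    rewrite (Dmuu u v Hr), (Dnuu u v Hr) in D.
    match type of D with derivable_pt_lim _ _ ?l => replace (4 * A u v * g2 u v * (mu u v ^ 2 - nu u v ^ 2)) with l by ring end.
    exact D. }
  assert (g2const : forall u v v', rect a b c d u v -> rect a b c d u v' -> g2 u v = g2 u v').
  { intros u v v' Hr Hr'.
    assert (E := dl_uniq_ext _ _ u _ _ (fu u v Hr) (fu u v' Hr')).
    assert (Hn : forall s, Rabs (s - u) < 1 -> True) by auto.
    destruct (rect_nu _ _ _ _ _ _ Hr) as [r [Hr0 Hr1]].
    specialize (E ltac:(exists r; split; auto; intros s Hs; apply fconst;
      [apply Hr1; auto| destruct (Hr1 s Hs), Hr'; split; auto])).
    rewrite <- (Aconst u v v' Hr Hr'), <- (fconst u v v' Hr Hr') in E.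
    assert (Hne : 4 * A u v * (mu u v ^ 2 - nu u v ^ 2) <> 0).
    { apply Rmult_integral_contrapositive; split; [|apply Hmn; auto].
      assert (0 < A u v) by (apply Apos; auto). lra. }
    apply Rmult_eq_reg_l with (4 * A u v * (mu u v ^ 2 - nu u v ^ 2)); auto. lra. }
  assert (hconst : forall u v v', rect a b c d u v -> rect a b c d u v' ->
     mu u v ^ 2 + nu u v ^ 2 = mu u v' ^ 2 + nu u v' ^ 2).
  { intros u v v' Hr Hr'.
    assert (E : g2U u v = g2U u v').
    { apply (dl_uniq_ext (fun s => g2 s v) (fun s => g2 s v') u); [apply Hg2U; auto|apply Hg2U; auto|].
      destruct (rect_nu _ _ _ _ _ _ Hr) as [r [Hr0 Hr1]].
      exists r; split; auto; intros s Hs; apply g2const;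
      [apply Hr1; auto| destruct (Hr1 s Hs), Hr'; split; auto]. }
    rewrite (Dg2u u v Hr), (Dg2u u v' Hr'), <- (Aconst u v v' Hr Hr'), <- (g2const u v v' Hr Hr') in E.
    assert (0 < A u v) by (apply Apos; auto).
    assert (E2 : g2 u v ^ 2 - mu u v ^ 2 - nu u v ^ 2 = g2 u v ^ 2 - mu u v' ^ 2 - nu u v' ^ 2).
    { apply Rmult_eq_reg_l with (A u v); auto. lra. }
    lra. }
  assert (b1zero : forall u v, rect a b c d u v -> b1 u v = 0).
  { intros u v Hr.
    assert (D := derivable_pt_lim_plus _ _ _ _ _ (sq_deriv _ _ _ (HmuV u v Hr))
                                              (sq_deriv _ _ _ (HnuV u v Hr))).
    destruct (rect_nv _ _ _ _ _ _ Hr) as [r [Hr0 Hr1]].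
    assert (Z := deriv_const_zero _ _ _ r D Hr0
       ltac:(intros t Ht; symmetry; apply hconst; auto)).
    rewrite (Dmuv u v Hr), (Dnuv u v Hr) in Z.
    destruct (Hon u v Hr) as (_&_&_&_&_&_&_&_&_&_&_&Hmu&Hnu&_).
    assert (0 < B u v) by (apply Bpos; auto).
    assert (Hne : -4 * B u v * mu u v * nu u v <> 0).
    { apply Rmult_integral_contrapositive; split; auto.
      apply Rmult_integral_contrapositive; split; lra. }
    apply Rmult_eq_reg_l with (-4 * B u v * mu u v * nu u v); auto. lra. }

  assert (muconst : forall u v v', rect a b c d u v -> rect a b c d u v' -> mu u v = mu u v').
  { intros u v v' [Hu Hv] [_ Hv'].
    apply (const_1d (fun t => mu u t) c d); auto. intros t Ht.
    assert (Hr : rect a b c d u t) by (split; auto).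
    replace 0 with (muV u t); [apply HmuV; auto|].
    rewrite (Dmuv u t Hr), (b1zero u t Hr). ring. }
  assert (nuconst : forall u v v', rect a b c d u v -> rect a b c d u v' -> nu u v = nu u v').
  { intros u v v' [Hu Hv] [_ Hv'].
    apply (const_1d (fun t => nu u t) c d); auto. intros t Ht.
    assert (Hr : rect a b c d u t) by (split; auto).
    replace 0 with (nuV u t); [apply HnuV; auto|].
    rewrite (Dnuv u t Hr), (b1zero u t Hr). ring. }
  assert (Hpm : forall u v, rect a b c d u v -> mu u v + nu u v <> 0 /\ mu u v - nu u v <> 0).
  { intros u v Hr. assert (Hq := Hmn u v Hr). split; intro Hc; apply Hq.
    - replace (mu u v) with (- nu u v) by lra. ring.
    - replace (mu u v) with (nu u v) by lra. ring. }
  assert (spu : forall u v, rect a b c d u v ->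
     derivable_pt_lim (fun s => mu s v + nu s v) u
       (A u v * (b2 u v + 2 * g2 u v) * (mu u v + nu u v))).
  { intros u v Hr. assert (D := derivable_pt_lim_plus _ _ _ _ _ (HmuU u v Hr) (HnuU u v Hr)).
    rewrite (Dmuu u v Hr), (Dnuu u v Hr) in D.
    match type of D with derivable_pt_lim _ _ ?l => replace (A u v * (b2 u v + 2 * g2 u v) * (mu u v + nu u v)) with l by ring end.
    exact D. }
  assert (smu : forall u v, rect a b c d u v ->
     derivable_pt_lim (fun s => mu s v - nu s v) u
       (A u v * (2 * g2 u v - b2 u v) * (mu u v - nu u v))).
  { intros u v Hr. assert (D := derivable_pt_lim_minus _ _ _ _ _ (HmuU u v Hr) (HnuU u v Hr)).
    rewrite (Dmuu u v Hr), (Dnuu u v Hr) in D.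
    match type of D with derivable_pt_lim _ _ ?l => replace (A u v * (2 * g2 u v - b2 u v) * (mu u v - nu u v)) with l by ring end.
    exact D. }
  assert (b2const : forall u v v', rect a b c d u v -> rect a b c d u v' -> b2 u v = b2 u v').
  { intros u v v' Hr Hr'.
    assert (E := dl_uniq_ext _ _ u _ _ (spu u v Hr) (spu u v' Hr')).
    destruct (rect_nu _ _ _ _ _ _ Hr) as [r [Hr0 Hr1]].
    specialize (E ltac:(exists r; split; auto; intros s Hs;
      assert (Hs1 := Hr1 s Hs); assert (Hs2 : rect a b c d s v') by (destruct Hs1, Hr'; split; auto);
      rewrite (muconst s v v' Hs1 Hs2), (nuconst s v v' Hs1 Hs2); reflexivity)).
    rewrite <- (Aconst u v v' Hr Hr'), <- (g2const u v v' Hr Hr'),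
      <- (muconst u v v' Hr Hr'), <- (nuconst u v v' Hr Hr') in E.
    assert (0 < A u v) by (apply Apos; auto).
    destruct (Hpm u v Hr) as [H1 _].
    assert (Hne : A u v * (mu u v + nu u v) <> 0).
    { apply Rmult_integral_contrapositive; split; auto; lra. }
    apply Rmult_eq_reg_l with (A u v * (mu u v + nu u v)); auto.
    apply Rplus_eq_reg_r with (A u v * (mu u v + nu u v) * (2 * g2 u v)).
    transitivity (A u v * (b2 u v + 2 * g2 u v) * (mu u v + nu u v)); [ring|].
    rewrite E. ring. }
  split; [|split; [exact b1zero|split]].
  - intros u v v' Hr Hr'. repeat split.
    + assert (HA := Aconst u v v' Hr Hr'). unfold A, sqE in HA.
      rewrite <- (sqrt_sqrt (Ecoef zu u v)), <- (sqrt_sqrt (Ecoef zu u v')), HA; auto;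
        apply Rlt_le; auto.
    + apply muconst; auto.
    + apply nuconst; auto.
    + apply g2const; auto.
    + apply b2const; auto.
  - intros u v Hr.
    exists (4 * A u v * g2 u v * (mu u v ^ 2 - nu u v ^ 2) / (mu u v ^ 2 - nu u v ^ 2)).
    split.
    + apply (ln_abs_deriv (fun s => mu s v ^ 2 - nu s v ^ 2)); [apply fu; auto|apply Hmn; auto].
    + change (sqrt (Ecoef zu u v)) with (A u v).
      assert (0 < A u v) by (apply Apos; auto). assert (Hq := Hmn u v Hr).
      field. split; lra.
  - intros u v Hr.
    destruct (Hpm u v Hr) as [H1 H2].
    exists (/ 2 * (A u v * (b2 u v + 2 * g2 u v) * (mu u v + nu u v) / (mu u v + nu u v) -
                  A u v * (2 * g2 u v - b2 u v) * (mu u v - nu u v) / (mu u v - nu u v))).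
    split.
    + apply (dl_ext (mult_real_fct (/ 2) (fun s => ln (Rabs (mu s v + nu s v)) - ln (Rabs (mu s v - nu s v))))).
      * apply derivable_pt_lim_scal. apply (derivable_pt_lim_minus (fun s => ln (Rabs (mu s v + nu s v)))
          (fun s => ln (Rabs (mu s v - nu s v)))).
        -- apply (ln_abs_deriv (fun s => mu s v + nu s v)); auto.
        -- apply (ln_abs_deriv (fun s => mu s v - nu s v)); auto.
      * destruct (rect_nu _ _ _ _ _ _ Hr) as [r [Hr0 Hr1]]. exists r; split; auto.
        intros s Hs. destruct (Hpm s v (Hr1 s Hs)) as [K1 K2].
        unfold mult_real_fct. rewrite ln_sqrt_ratio; auto.
    + change (sqrt (Ecoef zu u v)) with (A u v).
      assert (0 < A u v) by (apply Apos; auto).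
      field. repeat split; auto; lra.
Qed.
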